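(* For every integer $n \ge 7$, the integer $\left\lfloor n^2/5 \right\rfloor$ is composite. *)

(* Defs.v *)
From mathcomp Require Import all_boot.
Definition composite (m : nat) : Prop := 1 < m /\ ~~ prime m.

(* Main.v *)
Require Import Defs.
From mathcomp Require Import all_boot.
From mathcomp Require Import zify.

Lemma comp_mul a b : 1 < a -> 1 < b -> composite (a * b).
Proof.
move=> Ha Hb; split; first by nia.
apply/negP => /primeP [_ H].
have := H a (dvdn_mulr b (dvdnn a)).
case/orP => /eqP E; nia.
Qed.

Lemma key n a b s : n ^ 2 = a * b * 5 + s -> s < 5 -> 1 < a -> 1 < b ->
  composite (n ^ 2 %/ 5).
Proof.
move=> E Hs Ha Hb; rewrite E divnMDl // divn_small // addn0.
exact: comp_mul.
Qed.

Theorem mainTheorem1 : forall n : nat, 7 <= n -> composite (n ^ 2 %/ 5).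
Proof.
move=> n Hn.
have E := divn_eq n 5.
set k := n %/ 5 in E *. set r := n %% 5 in E *.
have Hr : r < 5 by rewrite /r ltn_mod.
move: E; clearbody k r => E.
have : r = 0 \/ r = 1 \/ r = 2 \/ r = 3 \/ r = 4 by lia.
case=> [Er|[Er|[Er|[Er|Er]]]]; rewrite Er in E.
- apply: (@key n 5 (k*k) 0); nia.
- apply: (@key n k (5*k+2) 1); nia.
- have [Hk|Hk] : k = 1 \/ 2 <= k by lia.
  + apply: (@key n 3 3 4); nia.
  + apply: (@key n k (5*k+4) 4); nia.
- apply: (@key n (5*k+1) (k+1) 4); nia.
- apply: (@key n (5*k+3) (k+1) 1); nia.
Qed.
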